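(* Suppose $\mathcal M$ is unichain. For every state $s\in\mathcal S$, the optimal activation advantage $\lambda\mapsto\alpha^*_s(\lambda)$ is $(2D_{\max}+1)$-Lipschitz continuous on $\mathbb R$, where $D_{\max}:=\max_{\pi\subseteq\mathcal S}D(P^\pi)$.
   Context: Setting. An MDP is $\mathcal M=(\mathcal S,\{0,1\},(P^a)_a,(r^a)_a)$, finite $\mathcal S$, row-stochastic $P^0,P^1$, rewards $r^0,r^1\in\mathbb R^{\mathcal S}$. A policy is a subset $\pi\subseteq\mathcal S$ of states where action 1 is played, inducing $P^\pi$, $r^\pi$; $\mathcal M$ is unichain if every $P^\pi$ has a single recurrent class. For $\lambda\in\mathbb R$, $\mathcal M(\lambda)$ has the same transitions and rewards $r^1-\lambda\mathbf 1$ (action 1), $r^0$ (action 0). For a unichain policy, bias $b^\pi(\lambda)$ solves $g^\pi\mathbf 1+b^\pi=r^\pi+P^\pi b^\pi$; activation advantage $\alpha^\pi_s(\lambda)=r^1_s-\lambda-r^0_s+(P^1_{s,\cdot}-P^0_{s,\cdot})\cdot b^\pi(\lambda)$. A policy is BO (bias optimal) in $\mathcal M(\lambda)$ if gain optimal and bias-maximal among gain-optimal policies; for unichain MDPs $\pi$ is BO iff $\alpha^\pi_s(\lambda)\ge0$ for $s\in\pi$, $\le0$ for $s\notin\pi$. The optimal activation advantage $\alpha^*_s(\lambda):=\alpha^\pi_s(\lambda)$ for any BO policy $\pi$ of $\mathcal M(\lambda)$ (independent of the choice); it is continuous and piecewise affine in $\lambda$. Diameter of unichain $P$ with recurrent class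 $\mathcal S_r$: $D(P)=\max_{s\in\mathcal S,s'\in\mathcal S_r}\mathbb E^P[\tau_{s,s'}]$. *)

(* Defs.v *)
From HB Require Import structures.
From mathcomp Require Import all_boot all_order all_algebra.
From mathcomp Require Import all_classical all_reals.
From mathcomp Require Import ereal topology normedtype sequences.

Set Implicit Arguments.
Unset Strict Implicit.
Unset Printing Implicit Defensive.

Import Order.TTheory GRing.Theory Num.Theory.
Local Open Scope ring_scope.

Section MDP.
Variables (R : realType) (S : finType).

Definition row_stochastic (P : S -> S -> R) : Prop :=
  (forall s t, 0 <= P s t) /\ (forall s, \sum_(t : S) P s t = 1).

(* policy pi : {set S} = states where action 1 is played *)
Definition Ppol (P0 P1 : S -> S -> R) (pi : {set S}) : S -> S -> R :=
  fun s t => if s \in pi then P1 s t else P0 s t.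

(* rewards of M(lambda): r1 - lambda for action 1, r0 for action 0 *)
Definition rpol (r0 r1 : S -> R) (l : R) (pi : {set S}) : S -> R :=
  fun s => if s \in pi then r1 s - l else r0 s.

Definition reach (P : S -> S -> R) : rel S := connect (fun s t => 0 < P s t).

Definition recurrent (P : S -> S -> R) (s : S) : bool :=
  [forall t, reach P s t ==> reach P t s].

Definition unichain_chain (P : S -> S -> R) : Prop :=
  (exists s, recurrent P s) /\
  (forall s t, recurrent P s -> recurrent P t -> reach P s t).

Definition unichain (P0 P1 : S -> S -> R) : Prop :=
  forall pi : {set S}, unichain_chain (Ppol P0 P1 pi).

Definition stationary (P : S -> S -> R) (mu : S -> R) : Prop :=
  (forall s, 0 <= mu s) /\ \sum_(s : S) mu s = 1 /\
  (forall t, mu t = \sum_(s : S) mu s * P s t).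

(* (g, b) is the gain / bias pair of the chain (P, r): evaluation equations
   g 1 + b = r + P b, normalised by P^* b = 0 (P^* rows = stationary law) *)
Definition gain_bias (P : S -> S -> R) (r : S -> R) (g : R) (b : S -> R) : Prop :=
  (forall s, g + b s = r s + \sum_(t : S) P s t * b t) /\
  exists mu, stationary P mu /\ \sum_(s : S) mu s * b s = 0.

Definition bias_optimal (P0 P1 : S -> S -> R) (r0 r1 : S -> R) (l : R)
    (pi : {set S}) : Prop :=
  exists g b, gain_bias (Ppol P0 P1 pi) (rpol r0 r1 l pi) g b /\
    forall (pi' : {set S}) g' b',
      gain_bias (Ppol P0 P1 pi') (rpol r0 r1 l pi') g' b' ->
      g' <= g /\ (g' = g -> forall s, b' s <= b s).

Definition act_adv (P0 P1 : S -> S -> R) (r0 r1 : S -> R) (b : S -> R)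
    (l : R) (s : S) : R :=
  r1 s - l - r0 s + \sum_(t : S) (P1 s t - P0 s t) * b t.

(* avoid P s' n s = P(tau_{s,s'} > n): probability that the chain started at s
   is not in s' at any of the times 0..n (first-step recursion of path sums) *)
Fixpoint avoid (P : S -> S -> R) (s' : S) (n : nat) (s : S) : R :=
  match n with
  | 0 => if s == s' then 0 else 1
  | n.+1 => if s == s' then 0 else \sum_(u : S) P s u * avoid P s' n u
  end.

Local Open Scope ereal_scope.

(* E[tau_{s,s'}] = sum_{n>=0} P(tau > n), tau = min{n >= 0 : X_n = s'} *)
Definition exp_hit (P : S -> S -> R) (s s' : S) : \bar R :=
  \sum_(n <oo) (avoid P s' n s)%:E.

Definition diameter (P : S -> S -> R) : \bar R :=
  \big[Order.max/0]_(s : S) \big[Order.max/0]_(s' : S | recurrent P s') exp_hit P s s'.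

Definition Dmax (P0 P1 : S -> S -> R) : \bar R :=
  \big[Order.max/0]_(pi : {set S}) diameter (Ppol P0 P1 pi).

End MDP.

(* Main.v *)
Require Import Defs.
From HB Require Import structures.
From mathcomp Require Import all_boot all_order all_algebra.
From mathcomp Require Import all_classical all_reals.
From mathcomp Require Import ereal topology normedtype sequences.
From Stdlib Require Import Lia.
From mathcomp Require Import zify ring lra.
Import Order.TTheory GRing.Theory Num.Theory.
Local Open Scope ring_scope.
Set Implicit Arguments.
Unset Strict Implicit.
Unset Printing Implicit Defensive.

Section Graph.
Variables (R : realType) (S : finType).
Implicit Types (P : S -> S -> R).

Definition closedP P (A : pred S) := forall x t, A x -> 0 < P x t -> A t.

Lemma reach_closed P (A : pred S) x t : closedP P A -> A x -> reach P x t -> A t.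
Proof.
move=> HA Ax /connectP [p pth ->]; elim: p x Ax pth => [|z p IH] x Ax //=.
by case/andP => Hxz Hp; apply: IH (HA _ _ Ax Hxz) Hp.
Qed.

Lemma closed_rec P (A : pred S) x0 : closedP P A -> A x0 ->
  exists2 y, A y & recurrent P y.
Proof.
move=> HA Ax0.
case: (@arg_minnP S x0 (fun y => reach P x0 y)
   (fun y => #|[set t | reach P y t]|)) => [|y Hy Hmin]; first exact: connect0.
exists y; first exact: reach_closed Hy.
apply/forallP => t; apply/implyP => Hyt.
have sub : [set u | reach P t u] \subset [set u | reach P y u].
  by apply/fintype.subsetP => u; rewrite !inE => Htu; apply: connect_trans Hyt Htu.
have := geq_leqif (subset_leqif_card sub).
have -> : (#|[set u | reach P y u]| <= #|[set u | reach P t u]|)%N.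
  by apply: Hmin; apply: connect_trans Hy Hyt.
move=> HH; have H := fintype.subsetP (esym HH).
by have := H y; rewrite !inE; apply; apply: connect0.
Qed.

Lemma rec_reach P y t : recurrent P y -> reach P y t -> recurrent P t.
Proof.
move=> /forallP Hy Hyt; apply/forallP => u; apply/implyP => Htu.
have Hyu : reach P y u by apply: connect_trans Hyt Htu.
have := Hy u; rewrite Hyu /= => Huy.
apply: connect_trans Huy Hyt.
Qed.

Lemma rec_closed P : closedP P (recurrent P).
Proof. by move=> x t Hx Hxt; apply: rec_reach Hx _; apply: connect1. Qed.

End Graph.

Lemma eq_le_refl (R : realType) (a b : R) : a = b -> a <= b.
Proof. by move=> ->. Qed.

Section Chain.
Variables (R : realType) (S : finType) (P : S -> S -> R).
Hypothesis HP : row_stochastic P.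
Hypothesis uc : unichain_chain P.

Lemma P_ge0 x t : 0 <= P x t. Proof. by case: HP. Qed.
Lemma P_sum1 x : \sum_t P x t = 1. Proof. by case: HP. Qed.

Lemma exists_min (w : S -> R) (x0 : S) : exists z, forall x, w z <= w x.
Proof.
case: (@arg_minP _ _ S x0 xpredT w) => // z _ Hz.
by exists z => x; apply: Hz.
Qed.

Lemma super_rec (w : S -> R) : (forall x, \sum_t P x t * w t <= w x) ->
  forall y, recurrent P y -> forall x, w y <= w x.
Proof.
move=> Hw y Hy.
have [z Hz] := exists_min w y.
pose A := [pred x | w x == w z].
have HA : closedP P A.
  move=> x t; rewrite /A /= => /eqP Hx Hxt; apply/eqP.
  have H0 : \sum_u P x u * (w u - w z) = 0.
    apply/eqP; rewrite eq_le; apply/andP; split.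
      under eq_bigr do rewrite mulrBr.
      by rewrite sumrB -big_distrl /= P_sum1 mul1r subr_le0 -Hx; apply: Hw.
    by apply: sumr_ge0 => u _; apply: mulr_ge0; [exact: P_ge0|rewrite subr_ge0].
  have Hnn : forall u, xpredT u -> 0 <= P x u * (w u - w z).
    by move=> u _; apply: mulr_ge0; [exact: P_ge0|rewrite subr_ge0].
  have := @psumr_eq0P _ _ xpredT (fun u => P x u * (w u - w z)) Hnn H0 t isT.
  move=> /eqP; rewrite mulf_eq0 => /orP [/eqP H|]; first by rewrite H ltxx in Hxt.
  by rewrite subr_eq0 => /eqP.
have [y0 Ay0 Hy0] := closed_rec HA (eqxx (w z) : A z).
have Hr : reach P y0 y by case: uc => _; apply.
have := reach_closed HA Ay0 Hr; rewrite /A /= => /eqP ->.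
exact: Hz.
Qed.

Lemma harm_const (w : S -> R) : (forall x, \sum_t P x t * w t = w x) ->
  forall x x', w x = w x'.
Proof.
move=> Hw.
have [y Hy] := uc.1.
have H1 := super_rec (fun x => eq_le_refl (Hw x)) Hy.
have H2 : forall x, - w y <= - w x.
  apply: (@super_rec (fun x => - w x)) => // x.
  rewrite -(Hw x) -sumrN; apply: eq_le_refl; apply: eq_bigr => t _.
  by rewrite mulrN.
have E : forall x, w x = w y.
  by move=> x; apply/eqP; rewrite eq_le H1 andbT -lerN2 H2.
by move=> x x'; rewrite !E.
Qed.

Lemma stat_support (rho : S -> R) : (forall x, 0 <= rho x) ->
  (forall t, rho t = \sum_s rho s * P s t) ->
  forall x, ~~ recurrent P x -> rho x = 0.
Proof.
move=> Hr0 Hst.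
pose PT s := \sum_(t | ~~ recurrent P t) P s t.
have PTrec s : recurrent P s -> PT s = 0.
  move=> Hs; apply: big1 => t Ht; apply/eqP; rewrite eq_le P_ge0 andbT.
  rewrite leNgt; apply/negP => Hst'.
  by move: Ht; rewrite (rec_closed Hs Hst').
have PT01 s : 0 <= PT s <= 1.
  apply/andP; split; first by apply: sumr_ge0 => t _; apply: P_ge0.
  rewrite -(P_sum1 s) [X in _ <= X](bigID (fun t => ~~ recurrent P t)) /=.
  by rewrite lerDl; apply: sumr_ge0 => t _; apply: P_ge0.
have E1 : \sum_(t | ~~ recurrent P t) rho t =
          \sum_(s | ~~ recurrent P s) rho s * PT s.
  rewrite (eq_bigr (fun t => \sum_s rho s * P s t)) //.
  rewrite exchange_big /= (bigID (fun s => ~~ recurrent P s)) /=.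
  rewrite [X in _ + X]big1 ?addr0; last first.
    by move=> s /negPn Hs; rewrite -big_distrr /= -/(PT s) PTrec // mulr0.
  by apply: eq_bigr => s _; rewrite big_distrr.
have E2 : \sum_(s | ~~ recurrent P s) rho s * (1 - PT s) = 0.
  under eq_bigr do rewrite mulrBr mulr1.
  by rewrite sumrB E1 subrr.
have E3 s : ~~ recurrent P s -> rho s * (1 - PT s) = 0.
  move=> Hs; apply: (psumr_eq0P _ E2) => //.
  move=> u _; apply: mulr_ge0 => //; rewrite subr_ge0; by case/andP: (PT01 u).
pose B := [pred x | (0 < rho x) && ~~ recurrent P x].
have HB : closedP P B.
  move=> x t /andP [Hx Hxr] Hxt.
  have PTx : PT x = 1.
    have := E3 x Hxr; move/eqP; rewrite mulf_eq0 (gt_eqF Hx) /= subr_eq0.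
    by move=> /eqP.
  have Ht : ~~ recurrent P t.
    apply/negP => Htr.
    have : \sum_(u | recurrent P u) P x u = 0.
      have : \sum_(u | recurrent P u) P x u + PT x = 1.
        by rewrite -(P_sum1 x) [X in _ = X](bigID (fun u => recurrent P u)).
      by rewrite PTx => H; rewrite -[LHS](addrK 1) H subrr.
    move/psumr_eq0P => /(_ (fun u _ => P_ge0 x u) t Htr) H.
    by rewrite H ltxx in Hxt.
  apply/andP; split => //.
  rewrite Hst (bigD1 x) //=; apply: (lt_le_trans (mulr_gt0 Hx Hxt)).
  rewrite lerDl; apply: sumr_ge0 => u _; apply: mulr_ge0 => //; exact: P_ge0.
move=> x Hx; apply/eqP; rewrite eq_le Hr0 andbT leNgt; apply/negP => Hpos.
have Bx : B x by rewrite /B /= Hpos Hx.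
have [y /andP [_ Hny] Hy] := closed_rec HB Bx.
by rewrite Hy in Hny.
Qed.

Lemma super_mu (w : S -> R) (mu : S -> R) :
  (forall x, \sum_t P x t * w t <= w x) -> stationary P mu ->
  forall x, \sum_y mu y * w y <= w x.
Proof.
move=> Hw [Hm0 [Hm1 Hmst]] x.
have [y0 Hy0] := uc.1.
have E : forall y, mu y * w y = mu y * w y0.
  move=> y; case Hy: (recurrent P y).
    congr (_ * _); apply/eqP; rewrite eq_le !super_rec //.
  by rewrite (stat_support Hm0 Hmst) ?Hy // !mul0r.
rewrite (eq_bigr _ (fun y _ => E y)) -big_distrl /= Hm1 mul1r.
exact: super_rec.
Qed.

End Chain.

Section LinAlg.
Variables (R : realType) (S : finType) (P : S -> S -> R).
Hypothesis HP : row_stochastic P.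
Hypothesis uc : unichain_chain P.

Local Notation n := #|S|.
Local Notation ev := (@enum_val S xpredT).

Lemma sum_ev (F : S -> R) : \sum_(i < n) F (enum_val i) = \sum_x F x.
Proof.
by rewrite -big_enum_val /=; apply: eq_bigl => x; rewrite inE.
Qed.

Definition rv (f : S -> R) : 'rV[R]_n := \row_j f (enum_val j).
Definition fn (u : 'rV[R]_n) : S -> R := fun x => u 0 (enum_rank x).

Lemma fn_ev u j : fn u (enum_val j) = u 0 j.
Proof. by rewrite /fn enum_valK. Qed.

Lemma fnK f : fn (rv f) = f.
Proof. by apply: funext => x; rewrite /fn /rv mxE enum_rankK. Qed.

Definition Amx : 'M[R]_n :=
  \matrix_(i, j) ((i == j)%:R - P (enum_val i) (enum_val j)).

Lemma sum_delta (u : 'rV[R]_n) j : \sum_i u 0 i * (i == j)%:R = u 0 j.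
Proof.
rewrite (bigD1 j) //= eqxx mulr1 big1 ?addr0 // => i /negbTE ->.
by rewrite mulr0.
Qed.

Lemma mulAT (u : 'rV[R]_n) j :
  (u *m Amx^T) 0 j = fn u (enum_val j) - \sum_x P (enum_val j) x * fn u x.
Proof.
rewrite !mxE.
under eq_bigr do rewrite !mxE eq_sym mulrBr.
rewrite sumrB sum_delta fn_ev; congr (_ - _).
rewrite -sum_ev; apply: eq_bigr => i _; by rewrite fn_ev mulrC.
Qed.

Lemma mulA (u : 'rV[R]_n) j :
  (u *m Amx) 0 j = fn u (enum_val j) - \sum_x fn u x * P x (enum_val j).
Proof.
rewrite !mxE.
under eq_bigr do rewrite !mxE mulrBr.
rewrite sumrB sum_delta fn_ev; congr (_ - _).
by rewrite -sum_ev; apply: eq_bigr => i _; rewrite fn_ev.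
Qed.

Lemma S_nonempty : (0 < n)%N.
Proof. by case: uc.1 => s _; apply/card_gt0P; exists s. Qed.

Definition e1 : 'rV[R]_n := rv (fun _ => 1).

Lemma e1_neq0 : e1 != 0.
Proof.
case: uc.1 => s _; apply/negP => /eqP /rowP /(_ (enum_rank s)).
by rewrite /e1 !mxE => /eqP; rewrite oner_eq0.
Qed.

Lemma rankAT_le : (\rank Amx^T <= n.-1)%N.
Proof.
have H : (e1 <= kermx Amx^T)%MS.
  apply/sub_kermxP; apply/rowP => j; rewrite mulAT !mxE fnK.
  under eq_bigr do rewrite mulr1.
  by case: HP => _ ->; rewrite subrr.
have := mxrankS H; rewrite mxrank_ker rank_rV e1_neq0.
have := S_nonempty; move: (\rank _) => k; case: n => // m _ /=. lia.
Qed.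

Lemma rankAT_ge : (n.-1 <= \rank Amx^T)%N.
Proof.
have H : (kermx Amx^T <= e1)%MS.
  apply/row_subP => i.
  set u := row i (kermx Amx^T).
  have Hu : u *m Amx^T = 0 by rewrite /u -row_mul mulmx_ker row0.
  have harm : forall x, \sum_t P x t * fn u t = fn u x.
    move=> x; move/rowP: Hu => /(_ (enum_rank x)).
    rewrite mulAT enum_rankK mxE => /eqP; rewrite subr_eq0 => /eqP.
    by move=> ->.
  case: uc.1 => s0 _.
  have -> : u = fn u s0 *: e1.
    apply/rowP => j; rewrite -[LHS]fn_ev [RHS]mxE /e1 mxE mulr1.
    exact: (harm_const HP uc harm).
  by apply: scalemx_sub.
have := mxrankS H; rewrite mxrank_ker rank_rV e1_neq0.
move: (\rank _) => k. lia.
Qed.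

Lemma rankAT : \rank Amx^T = n.-1.
Proof. by apply/eqP; rewrite eqn_leq rankAT_le rankAT_ge. Qed.

Lemma exists_stationary : exists mu, stationary P mu.
Proof.
have Hk : \rank (kermx Amx) = 1%N.
  rewrite mxrank_ker -mxrank_tr rankAT; have := S_nonempty; case: n => //.
  move=> m _ /=; lia.
have HK : kermx Amx != 0 by rewrite -mxrank_eq0 Hk.
have [i Hi] : exists i, row i (kermx Amx) != 0.
  case: (pickP (fun i => row i (kermx Amx) != 0)) => [i Hi|Hnone]; first by exists i.
  exfalso; move/negP: HK; apply; apply/eqP/row_matrixP => i.
  by move: (Hnone i) => /negbFE /eqP ->; rewrite row0.
set v := row i (kermx Amx) in Hi.
have Hv : v *m Amx = 0 by rewrite /v -row_mul mulmx_ker row0.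
pose nu := fn v.
have Hnu : forall t, nu t = \sum_x nu x * P x t.
  move=> t; move/rowP: Hv => /(_ (enum_rank t)).
  rewrite mulA enum_rankK mxE => /eqP; rewrite subr_eq0 => /eqP.
  by [].
have [x0 Hx0] : exists x, nu x != 0.
  case: (pickP (fun x => nu x != 0)) => [x Hx|Hnone]; first by exists x.
  exfalso; move/negP: Hi; apply; apply/eqP/rowP => j.
  by move: (Hnone (enum_val j)) => /negbFE /eqP; rewrite /nu fn_ev => ->; rewrite mxE.
pose Z := \sum_x `|nu x|.
have Habs : forall t, `|nu t| <= \sum_x `|nu x| * P x t.
  move=> t; rewrite {1}Hnu; apply: le_trans (ler_norm_sum _ _ _) _.
  apply: ler_sum => x _; rewrite normrM (ger0_norm (P_ge0 HP x t)) //.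
have Hsum : \sum_t \sum_x `|nu x| * P x t = Z.
  rewrite exchange_big /=; apply: eq_bigr => x _.
  by rewrite -big_distrr /= (P_sum1 HP) mulr1.
have Heq : forall t, `|nu t| = \sum_x `|nu x| * P x t.
  have H0 : \sum_t (\sum_x `|nu x| * P x t - `|nu t|) = 0.
    by rewrite sumrB Hsum subrr.
  move=> t; apply/eqP; rewrite eq_sym -subr_eq0; apply/eqP.
  apply: (psumr_eq0P _ H0) => // u _; rewrite subr_ge0; exact: Habs.
have HZ : 0 < Z.
  rewrite /Z (bigD1 x0) //=; apply: (lt_le_trans (_ : 0 < `|nu x0|)).
    by rewrite normr_gt0.
  by rewrite lerDl; apply: sumr_ge0 => x _.
exists (fun x => `|nu x| / Z); split; [|split].
- by move=> x; apply: divr_ge0 => //; exact: ltW.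
- by rewrite -big_distrl /= -/Z mulfV // gt_eqF.
- move=> t; rewrite Heq big_distrl /=; apply: eq_bigr => x _.
  by rewrite mulrAC.
Qed.

Lemma gain_mu (mu f h : S -> R) (g : R) : stationary P mu ->
  (forall x, g + h x = f x + \sum_t P x t * h t) -> g = \sum_x mu x * f x.
Proof.
move=> [Hm0 [Hm1 Hst]] Hgh.
have E : \sum_x mu x * (g + h x) = \sum_x mu x * (f x + \sum_t P x t * h t).
  by apply: eq_bigr => x _; rewrite Hgh.
move: E; under eq_bigr do rewrite mulrDr; under [in RHS]eq_bigr do rewrite mulrDr.
rewrite !big_split /= -big_distrl /= Hm1 mul1r.
have -> : \sum_x mu x * \sum_t P x t * h t = \sum_t mu t * h t.
  under eq_bigr do rewrite big_distrr /=.
  rewrite exchange_big /=; apply: eq_bigr => t _.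
  by rewrite Hst big_distrl /=; apply: eq_bigr => x _; rewrite mulrA.
by move=> E; apply: (addIr (\sum_t mu t * h t)); rewrite E.
Qed.

Lemma poisson (f : S -> R) : exists g h, gain_bias P f g h.
Proof.
have [mu Hmu] := exists_stationary.
have [Hm0 [Hm1 Hst]] := Hmu.
pose g := \sum_x mu x * f x.
pose M := (rv mu)^T.
have HM : (Amx^T <= kermx M)%MS.
  apply/sub_kermxP; rewrite /M -trmx_mul.
  have -> : rv mu *m Amx = 0.
    apply/rowP => j; rewrite mulA fnK mxE -Hst subrr //.
  by rewrite trmx0.
have Hmu0 : rv mu != 0.
  apply/negP => /eqP H0.
  have : \sum_x mu x = 0.
    by apply: big1 => x _; rewrite -(fnK mu) H0 /fn mxE.
  by rewrite Hm1 => /eqP; rewrite oner_eq0.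
have HrM : \rank (kermx M) = n.-1.
  rewrite mxrank_ker /M mxrank_tr rank_rV Hmu0; lia.
have HK : (kermx M <= Amx^T)%MS.
  by rewrite -(geq_leqif (mxrank_leqif_sup HM)) HrM rankAT.
pose f' := fun x => f x - g.
have Hf : (rv f' <= kermx M)%MS.
  apply/sub_kermxP; apply/rowP => j; rewrite !mxE.
  under eq_bigr do rewrite !mxE.
  rewrite (sum_ev (fun x => f' x * mu x)) /f'.
  under eq_bigr do rewrite mulrBl.
  rewrite sumrB -big_distrr /= Hm1 mulr1 /g.
  by rewrite (eq_bigr (fun x => mu x * f x)) ?subrr // => x _; rewrite mulrC.
have [D HD] := submxP (submx_trans Hf HK).
pose h := fn D.
have Hh : forall x, f x - g = h x - \sum_t P x t * h t.
  move=> x; move/rowP: HD => /(_ (enum_rank x)).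
  by rewrite mulAT enum_rankK mxE enum_rankK.
pose c := \sum_y mu y * h y.
exists g, (fun x => h x - c); split.
  move=> x.
  have -> : \sum_t P x t * (h t - c) = \sum_t P x t * h t - c.
    under eq_bigr do rewrite mulrBr.
    by rewrite sumrB -big_distrl /= (P_sum1 HP) mul1r.
  have := Hh x; lra.
exists mu; split => //.
under eq_bigr do rewrite mulrBr.
by rewrite sumrB -big_distrl /= Hm1 mul1r subrr.
Qed.

Lemma stat_unique (mu nu : S -> R) : stationary P mu -> stationary P nu -> mu = nu.
Proof.
move=> Hmu Hnu; apply: funext => x.
have [g [h [Hgh _]]] := poisson (fun y => (y == x)%:R).
have E1 := gain_mu Hmu Hgh; have E2 := gain_mu Hnu Hgh.
have F : forall (m : S -> R), \sum_y m y * (y == x)%:R = m x.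
  move=> m; rewrite (bigD1 x) //= eqxx mulr1 big1 ?addr0 // => y /negbTE ->.
  by rewrite mulr0.
by rewrite -(F mu) -(F nu) -E1 -E2.
Qed.

End LinAlg.

Lemma gb_unique (R : realType) (S : finType) (P : S -> S -> R) (r : S -> R) g b g' b' :
  row_stochastic P -> unichain_chain P ->
  gain_bias P r g b -> gain_bias P r g' b' -> g = g' /\ b = b'.
Proof.
move=> HP uc [Hgb [mu [Hmu Hn]]] [Hgb' [mu' [Hmu' Hn']]].
have Eg : g = g' by rewrite (gain_mu Hmu Hgb) (gain_mu Hmu Hgb').
subst g'; split => //.
pose w := fun x => b x - b' x.
have Hw : forall x, \sum_t P x t * w t = w x.
  move=> x; under eq_bigr do rewrite /w mulrBr.
  rewrite sumrB; have := Hgb x; have := Hgb' x; rewrite /w; lra.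
have Hc := harm_const HP uc Hw.
have E := stat_unique HP uc Hmu Hmu'; subst mu'.
have [Hm0 [Hm1 _]] := Hmu.
case: uc.1 => x0 _.
have Hs : \sum_y mu y * w y = w x0.
  rewrite (eq_bigr (fun y => mu y * w x0)); last by move=> y _; rewrite (Hc y x0).
  by rewrite -big_distrl /= Hm1 mul1r.
have Hs2 : \sum_y mu y * w y = 0.
  under eq_bigr do rewrite /w mulrBr.
  by rewrite sumrB Hn Hn' subrr.
apply: funext => x; apply/eqP; rewrite -subr_eq0; apply/eqP.
by rewrite -/(w x) (Hc x x0) -Hs Hs2.
Qed.

Section MDP2.
Variables (R : realType) (S : finType) (P0 P1 : S -> S -> R) (r0 r1 : S -> R).
Hypotheses (H0 : row_stochastic P0) (H1 : row_stochastic P1) (Hu : unichain P0 P1).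

Lemma Ppol_stoch pi : row_stochastic (Ppol P0 P1 pi).
Proof.
split.
  by move=> s t; rewrite /Ppol; case: (s \in pi); [case: H1|case: H0].
move=> s; rewrite /Ppol; by case: (s \in pi); [case: H1|case: H0].
Qed.

Lemma switch_ineq l (pi : {set S}) g b (pi'' : {set S}) x :
  bias_optimal P0 P1 r0 r1 l pi ->
  gain_bias (Ppol P0 P1 pi) (rpol r0 r1 l pi) g b ->
  (forall y, y != x -> (y \in pi'') = (y \in pi)) ->
  rpol r0 r1 l pi'' x + \sum_t Ppol P0 P1 pi'' x t * b t <= g + b x.
Proof.
move=> [gW [bW [HgbW Hopt]]] Hgb Hsame.
have [EgW EbW] := gb_unique (Ppol_stoch pi) (Hu pi) HgbW Hgb.
subst gW bW.
rewrite leNgt; apply/negP => Hlt.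
set Q := Ppol P0 P1 pi; set Q'' := Ppol P0 P1 pi''.
set r := rpol r0 r1 l pi; set r'' := rpol r0 r1 l pi''.
pose eps := r'' x + \sum_t Q'' x t * b t - (g + b x).
have Heps : 0 < eps by rewrite /eps subr_gt0.
have Hrow : forall y, y != x -> Q'' y = Q y /\ r'' y = r y.
  move=> y Hy; rewrite /Q'' /Q /r'' /r /Ppol /rpol (Hsame y Hy); split => //.
have Hgb0 := Hgb; case: Hgb0 => Heq [mu [Hmu Hnb]].
have Hg1 : forall y, g + b y = (r'' y - (y == x)%:R * eps) + \sum_t Q'' y t * b t.
  move=> y; case: (eqVneq y x) => [->|Hy].
    by rewrite ?eqxx mul1r /eps; lra.
  rewrite ?mul0r ?subr0; have [-> ->] := Hrow y Hy; exact: Heq.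
have [g'' [b'' Hgb'']] := poisson (Ppol_stoch pi'') (Hu pi'') r''.
have Hgb''0 := Hgb''; case: Hgb''0 => Heq'' [mu'' [Hmu'' Hnb'']].
have Eg := gain_mu Hmu'' Hg1.
have Eg'' := gain_mu Hmu'' Heq''.
have Emu : \sum_y mu'' y * (r'' y - (y == x)%:R * eps) =
           \sum_y mu'' y * r'' y - mu'' x * eps.
  under eq_bigr do rewrite mulrBr.
  rewrite sumrB; congr (_ - _).
  rewrite (bigD1 x) //= eqxx mul1r big1 ?addr0 ?mulrA //.
  by move=> y /negbTE ->; rewrite mul0r mulr0.
have [Hm0 [Hm1 Hmst]] := Hmu''.
have [Hle Htie] := Hopt pi'' g'' b'' Hgb''.
have Hmx : mu'' x = 0.
  apply/eqP; rewrite eq_le Hm0 andbT.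
  have : mu'' x * eps <= 0 by move: Hle; rewrite Eg'' Eg Emu; lra.
  by rewrite pmulr_lle0.
have Egg : g'' = g by move: Eg; rewrite Emu Hmx mul0r subr0 -Eg''.
have HmuQ : stationary Q mu''.
  split => //; split => // t; rewrite Hmst; apply: eq_bigr => y _.
  case: (eqVneq y x) => [->|Hy]; first by rewrite Hmx !mul0r.
  by have [E _] := Hrow y Hy; move: E; rewrite /Q'' /Q => ->.
have Emu1 := stat_unique (Ppol_stoch pi) (Hu pi) HmuQ Hmu.
have Emu2 := stat_unique (Ppol_stoch pi'') (Hu pi'') Hmu'' Hmu''.
pose w := fun y => b'' y - b y.
have Hw : forall y, \sum_t Q'' y t * w t <= w y.
  move=> y; under eq_bigr do rewrite /w mulrBr.
  rewrite sumrB; have := Heq'' y; have := Hg1 y; rewrite Egg /w.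
  have : 0 <= (y == x)%:R * eps by apply: mulr_ge0 => //; exact: ltW.
  lra.
have Hsw := super_mu (Ppol_stoch pi'') (Hu pi'') Hw Hmu''.
have Hs0 : \sum_y mu'' y * w y = 0.
  under eq_bigr do rewrite /w mulrBr.
  by rewrite sumrB Hnb'' Emu1 Hnb subrr.
have Hwx : eps <= w x.
  have Hsum : \sum_t Q'' x t * w t =
     \sum_t Q'' x t * b'' t - \sum_t Q'' x t * b t.
    by rewrite -sumrB; apply: eq_bigr => t _; rewrite /w mulrBr.
  have : 0 <= \sum_t Q'' x t * w t.
    apply: sumr_ge0 => t _; apply: mulr_ge0; first by case: (Ppol_stoch pi'').
    by rewrite -Hs0 Hsw.
  have := Heq'' x; have := Hg1 x; rewrite Egg ?eqxx mul1r.
  rewrite /w in Hsum *; lra.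
have := Htie Egg x; rewrite /w in Hwx; lra.
Qed.

End MDP2.

Section MDP3.
Variables (R : realType) (S : finType) (P0 P1 : S -> S -> R) (r0 r1 : S -> R).
Hypotheses (H0 : row_stochastic P0) (H1 : row_stochastic P1) (Hu : unichain P0 P1).

Lemma opt_ineq l (pi : {set S}) g b (sigma : {set S}) x :
  bias_optimal P0 P1 r0 r1 l pi ->
  gain_bias (Ppol P0 P1 pi) (rpol r0 r1 l pi) g b ->
  rpol r0 r1 l sigma x + \sum_t Ppol P0 P1 sigma x t * b t <= g + b x.
Proof.
move=> Hbo Hgb.
pose pi'' := if x \in sigma then pi :|: [set x] else pi :\ x.
have Hx : (x \in pi'') = (x \in sigma).
  by case Hxs: (x \in sigma); rewrite /pi'' Hxs !inE ?eqxx ?orbT.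
have -> : rpol r0 r1 l sigma x = rpol r0 r1 l pi'' x by rewrite /rpol Hx.
have -> : Ppol P0 P1 sigma x = Ppol P0 P1 pi'' x by rewrite /Ppol Hx.
apply: (switch_ineq H0 H1 Hu Hbo Hgb) => y Hy.
case Hxs: (x \in sigma); rewrite /pi'' Hxs.
  by rewrite finset.in_setU finset.in_set1 (negbTE Hy) orbF.
by rewrite finset.in_setD1 Hy.
Qed.

Lemma common_rec (pi1 pi2 : {set S}) :
  exists y, recurrent (Ppol P0 P1 pi1) y && recurrent (Ppol P0 P1 pi2) y.
Proof.
set C1 := recurrent (Ppol P0 P1 pi1); set C2 := recurrent (Ppol P0 P1 pi2).
case: (pickP [pred y | C1 y && C2 y]) => [y Hy|Hnone]; first by exists y.
exfalso.
pose sigma := [set x | if C1 x then x \in pi1 else x \in pi2].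
have Hs : forall x, Ppol P0 P1 sigma x =
   if C1 x then Ppol P0 P1 pi1 x else Ppol P0 P1 pi2 x.
  by move=> x; rewrite /Ppol inE; case: (C1 x).
have HA1 : closedP (Ppol P0 P1 sigma) C1.
  move=> x t Hx; rewrite Hs Hx => Hxt; exact: rec_closed Hx Hxt.
have HA2 : closedP (Ppol P0 P1 sigma) C2.
  move=> x t Hx.
  have HC1 : C1 x = false by have := Hnone x; rewrite /= Hx andbT.
  rewrite Hs HC1 => Hxt; exact: rec_closed Hx Hxt.
have [x1 Hx1] := (Hu pi1).1; have [x2 Hx2] := (Hu pi2).1.
have [y1 Hy1 Hr1] := closed_rec HA1 Hx1.
have [y2 Hy2 Hr2] := closed_rec HA2 Hx2.
have Hreach : reach (Ppol P0 P1 sigma) y1 y2 by case: (Hu sigma) => _; apply.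
have := reach_closed HA1 Hy1 Hreach => Hc.
by have := Hnone y2; rewrite /= Hc Hy2.
Qed.
End MDP3.

Section Hit.
Variables (R : realType) (S : finType) (P : S -> S -> R) (y : S).
Hypothesis HP : row_stochastic P.

Fixpoint Kop (n : nat) (phi : S -> R) (x : S) : R :=
  if x == y then 0 else
  match n with 0 => phi x | n'.+1 => \sum_t P x t * Kop n' phi t end.

Lemma avoidK n x : avoid P y n x = Kop n (fun _ => 1) x.
Proof.
elim: n x => [|n IH] x //=; case: (x == y) => //.
by apply: eq_bigr => t _; rewrite IH.
Qed.

Lemma Kop_mono n (phi psi : S -> R) : (forall t, phi t <= psi t) ->
  forall x, Kop n phi x <= Kop n psi x.
Proof.
move=> Hle; elim: n => [|n IH] x /=; case: (x == y) => //.
apply: ler_sum => t _; apply: ler_wpM2l => //; by case: HP.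
Qed.

Lemma Kop_const n c x : Kop n (fun _ => c) x = c * Kop n (fun _ => 1) x.
Proof.
elim: n x => [|n IH] x /=; case: (x == y); rewrite ?mulr0 ?mulr1 //.
rewrite big_distrr /=; apply: eq_bigr => t _; rewrite IH; lra.
Qed.

Lemma avoid_y n : avoid P y n y = 0.
Proof. by case: n => [|n] /=; rewrite eqxx. Qed.

Lemma avoid_01 n x : 0 <= avoid P y n x <= 1.
Proof.
elim: n x => [|n IH] x /=; case: (x == y) => //=; rewrite ?lexx ?ler01 //.
apply/andP; split.
  apply: sumr_ge0 => t _; apply: mulr_ge0; first by case: HP.
  by case/andP: (IH t).
case: HP => HP0 HP1; rewrite -(HP1 x); apply: ler_sum => t _.
by rewrite -[X in _ <= X]mulr1; apply: ler_wpM2l => //; case/andP: (IH t).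
Qed.

Lemma avoid_anti n x : avoid P y n.+1 x <= avoid P y n x.
Proof.
elim: n x => [|n IH] x.
  case: (eqVneq x y) => [->|Hxy]; first by rewrite !avoid_y.
  rewrite [avoid _ _ 0 _]/= (negbTE Hxy); by case/andP: (avoid_01 1 x).
rewrite /=; case: (x == y) => //.
apply: ler_sum => t _; apply: ler_wpM2l; [by case: HP | exact: IH].
Qed.

Lemma avoid_le k n x : (k <= n)%N -> avoid P y n x <= avoid P y k x.
Proof.
move=> /subnKC <-; elim: (n - k)%N => [|d IH]; first by rewrite addn0.
by rewrite addnS; apply: le_trans (avoid_anti _ _) IH.
Qed.

Lemma key (v : S -> R) (C : R) :
  (forall x, x != y -> v x - \sum_t P x t * v t <= C) ->
  forall n x, v x - v y <=
     C * \sum_(0 <= k < n) avoid P y k x + Kop n (fun t => v t - v y) x.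
Proof.
move=> Hv; case: (HP) => HP0 HP1.
set u := fun t => v t - v y.
elim=> [|n IH] x.
  rewrite big_geq // mulr0 add0r /=; case: (eqVneq x y) => [->|_] //.
  by rewrite subrr.
rewrite big_nat_recl //.
case: (eqVneq x y) => [->|Hxy].
  have Hb : \sum_(0 <= i < n) avoid P y i.+1 y = 0.
    by apply: big1 => k _; apply: avoid_y.
  rewrite subrr Hb avoid_y /= eqxx; lra.
have Hux : u x <= C + \sum_t P x t * u t.
  have -> : \sum_t P x t * u t = \sum_t P x t * v t - v y.
    rewrite /u; under eq_bigr do rewrite mulrBr.
    by rewrite sumrB -big_distrl /= HP1 mul1r.
  have := Hv x Hxy; rewrite /u; lra.
have H2 : \sum_t P x t * u t <=
    \sum_t P x t * (C * \sum_(0 <= k < n) avoid P y k t + Kop n u t).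
  by apply: ler_sum => t _; apply: ler_wpM2l => //; apply: IH.
have H3 : \sum_t P x t * (C * \sum_(0 <= k < n) avoid P y k t + Kop n u t) =
    C * \sum_(0 <= k < n) avoid P y k.+1 x + \sum_t P x t * Kop n u t.
  under eq_bigr do rewrite mulrDr.
  rewrite big_split /=; congr (_ + _).
  under eq_bigr do rewrite mulrCA.
  rewrite -big_distrr /=; congr (C * _).
  under eq_bigr do rewrite big_distrr /=.
  rewrite exchange_big /=; apply: eq_bigr => k _.
  by rewrite /= (negbTE Hxy).
have A0 : avoid P y 0 x = 1 by rewrite /= (negbTE Hxy).
rewrite A0 mulrDr mulr1.
have -> : Kop n.+1 u x = \sum_t P x t * Kop n u t by rewrite /= (negbTE Hxy).
have Eu : u x = v x - v y by [].
lra.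
Qed.

End Hit.

Section Hit2.
Variables (R : realType) (S : finType) (P : S -> S -> R) (y : S).
Hypothesis HP : row_stochastic P.

Lemma hit_bound (v : S -> R) (C : R) : 0 < C ->
  (forall x, x != y -> v x - \sum_t P x t * v t <= C) ->
  forall x, ((v x - v y)%:E <= C%:E * exp_hit P x y)%E.
Proof.
move=> HC Hv x.
have Hps : forall n, ((\sum_(0 <= k < n) avoid P y k x)%:E <= exp_hit P x y)%E.
  move=> n; rewrite -sumEFin; apply: nneseries_lim_ge => k _ _.
  by rewrite lee_fin; case/andP: (avoid_01 y HP k x).
case E: (exp_hit P x y) => [e| |].
- rewrite -EFinM lee_fin.
  have Hse : forall n, \sum_(0 <= k < n) avoid P y k x <= e.
    by move=> n; have := Hps n; rewrite E lee_fin.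
  have He0 : 0 <= e by have := Hse 0%N; rewrite big_geq.
  pose M := \sum_t `|v t - v y|.
  have HuM : forall t, v t - v y <= M.
    move=> t; apply: le_trans (ler_norm _) _; rewrite /M (bigD1 t) //=.
    by rewrite lerDl; apply: sumr_ge0 => s _.
  have HM0 : 0 <= M by apply: sumr_ge0 => s _.
  have Hkey : forall n, v x - v y <= C * e + M * avoid P y n x.
    move=> n; apply: le_trans (key HP Hv n x) _.
    apply: lerD; first by apply: ler_wpM2l; [exact: ltW | exact: Hse].
    apply: le_trans (Kop_mono y HP n HuM x) _.
    by rewrite Kop_const avoidK.
  have Hna : forall n, n%:R * avoid P y n x <= e.
    move=> n; apply: le_trans (Hse n).
    have -> : n%:R * avoid P y n x = \sum_(0 <= k < n) avoid P y n x.
      by rewrite sumr_const_nat subn0 mulr_natl.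
    apply: ler_sum_nat => k /andP [_ Hk]; apply: (avoid_le y HP); exact: ltnW.
  rewrite leNgt; apply/negP => Hlt.
  set eta := v x - v y - C * e.
  have Heta : 0 < eta by rewrite /eta subr_gt0.
  pose N := (Num.Def.archi_bound (M * e / eta)).+1.
  have HN : M * e / eta < N%:R.
    apply: lt_trans (archi_boundP _) _.
      by apply: divr_ge0 => //; [exact: mulr_ge0 | exact: ltW].
    by rewrite ltr_nat.
  rewrite ltr_pdivrMr // in HN.
  have HN0 : 0 < N%:R :> R by rewrite ltr0n.
  set a := avoid P y N x in Hkey Hna.
  have h0 := Hkey N; rewrite -/a in h0.
  have h1 : M * (N%:R * a) <= M * e by apply: ler_wpM2l.
  have h2 : N%:R * eta <= N%:R * (M * a).
    by apply: ler_wpM2l; [exact: ltW | rewrite /eta; lra].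
  nra.
- by rewrite gt0_muley ?lte_fin // leey.
- by have := Hps 0%N; rewrite E big_geq // leeNy_eq.
Qed.

End Hit2.

Lemma stat_avg (R : realType) (S : finType) (P : S -> S -> R) (mu w : S -> R) :
  stationary P mu -> \sum_x mu x * (w x - \sum_t P x t * w t) = 0.
Proof.
move=> [_ [_ Hst]].
under eq_bigr do rewrite mulrBr.
rewrite sumrB; apply/eqP; rewrite subr_eq0; apply/eqP.
under [in RHS]eq_bigr do rewrite big_distrr /=.
rewrite exchange_big /=; apply: eq_bigr => t _.
by rewrite Hst big_distrl /=; apply: eq_bigr => x _; rewrite mulrA.
Qed.

Lemma avg_le (R : realType) (S : finType) (mu f h : S -> R) :
  (forall x, 0 <= mu x) -> (forall x, f x <= h x) ->
  \sum_x mu x * f x <= \sum_x mu x * h x.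
Proof. by move=> H0 H; apply: ler_sum => x _; apply: ler_wpM2l. Qed.

Lemma sumP_le (R : realType) (S : finType) (P : S -> S -> R) x (w : S -> R) c :
  row_stochastic P -> (forall t, w t <= c) -> \sum_t P x t * w t <= c.
Proof.
move=> [HP0 HP1] Hw; apply: le_trans (_ : _ <= \sum_t P x t * c) _.
  by apply: ler_sum => t _; apply: ler_wpM2l.
by rewrite -big_distrl /= HP1 mul1r.
Qed.

Lemma sumP_ge (R : realType) (S : finType) (P : S -> S -> R) x (w : S -> R) c :
  row_stochastic P -> (forall t, c <= w t) -> c <= \sum_t P x t * w t.
Proof.
move=> [HP0 HP1] Hw; apply: le_trans (_ : _ <= \sum_t P x t * c) _.
  by rewrite -big_distrl /= HP1 mul1r.
by apply: ler_sum => t _; apply: ler_wpM2l.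
Qed.

Lemma rpol_diff (R : realType) (S : finType) (r0 r1 : S -> R) l1 l2 (pi : {set S}) x :
  rpol r0 r1 l1 pi x - rpol r0 r1 l2 pi x = - (l1 - l2) * (x \in pi)%:R.
Proof. by rewrite /rpol; case: (x \in pi) => /=; rewrite ?mulr1 ?mulr0; lra. Qed.

Lemma ind01 (R : realType) (b : bool) : (b%:R : R) = 0 \/ (b%:R : R) = 1.
Proof. by case: b; [right|left]. Qed.

Lemma arith (R : realType) (d G m1 m2 t : R) :
  d * m1 <= G -> G <= d * m2 -> 0 <= m1 <= 1 -> 0 <= m2 <= 1 ->
  (t = 0 \/ t = 1) -> G - d * t <= `|d| /\ - G + d * t <= `|d|.
Proof.
move=> h1 h2 /andP [a1 b1] /andP [a2 b2] ht.
have [Hd|Hd] := lerP 0 d.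
  rewrite ger0_norm //.
  have : d * m2 <= d by rewrite -[X in _ <= X]mulr1; apply: ler_wpM2l.
  have : 0 <= d * m1 by apply: mulr_ge0.
  by case: ht => ->; rewrite ?mulr0 ?mulr1; lra.
rewrite ltr0_norm //.
have : d <= d * m1 by rewrite -[X in X <= _]mulr1; apply: ler_wnM2l => //; exact: ltW.
have : d * m2 <= 0 by apply: mulr_le0_ge0 => //; exact: ltW.
by case: ht => ->; rewrite ?mulr0 ?mulr1; lra.
Qed.

Lemma bigmax_ge0 (R : realType) (I : finType) (F : I -> \bar R) :
  (0 <= \big[Order.max/0]_(i : I) F i)%E.
Proof.
apply: (big_rec (fun x => 0 <= x)%E) => // i x _ Hx.
by rewrite le_max Hx orbT.
Qed.

Lemma exp_hit_le_Dmax (R : realType) (S : finType) (P0 P1 : S -> S -> R)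
   (pi : {set S}) x y :
  recurrent (Ppol P0 P1 pi) y -> (exp_hit (Ppol P0 P1 pi) x y <= Dmax P0 P1)%E.
Proof.
move=> Hy.
apply: le_trans (_ : (_ <= diameter (Ppol P0 P1 pi))%E) _; last first.
  by rewrite /Dmax; apply: (le_bigmax_cond _ (P := xpredT) (fun pi => diameter (Ppol P0 P1 pi))).
apply: le_trans (_ : (_ <= \big[Order.max/0%E]_(s' : S | recurrent (Ppol P0 P1 pi) s')
   exp_hit (Ppol P0 P1 pi) x s')%E) _.
  exact: (le_bigmax_cond _ (P := recurrent (Ppol P0 P1 pi))).
rewrite /diameter.
exact: (le_bigmax_cond _ (P := xpredT) (fun s => \big[Order.max/0%E]_(s' : S | recurrent (Ppol P0 P1 pi) s')
   exp_hit (Ppol P0 P1 pi) s s')).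
Qed.

Unset Implicit Arguments.

Theorem mainTheorem9 (R : realType) (S : finType)
  (P0 P1 : S -> S -> R) (r0 r1 : S -> R) :
  row_stochastic P0 -> row_stochastic P1 -> unichain P0 P1 ->
  forall (s : S) (l1 l2 : R) (pi1 pi2 : {set S}) (g1 g2 : R) (b1 b2 : S -> R),
  bias_optimal P0 P1 r0 r1 l1 pi1 ->
  gain_bias (Ppol P0 P1 pi1) (rpol r0 r1 l1 pi1) g1 b1 ->
  bias_optimal P0 P1 r0 r1 l2 pi2 ->
  gain_bias (Ppol P0 P1 pi2) (rpol r0 r1 l2 pi2) g2 b2 ->
  (`|act_adv P0 P1 r0 r1 b1 l1 s - act_adv P0 P1 r0 r1 b2 l2 s|%:E
     <= (2%:E * Dmax P0 P1 + 1%:E) * `|l1 - l2|%:E)%E.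
Proof.
move=> H0 H1 Hu s l1 l2 pi1 pi2 g1 g2 b1 b2 Hbo1 Hgb1 Hbo2 Hgb2.
have Hdiff : act_adv P0 P1 r0 r1 b1 l1 s - act_adv P0 P1 r0 r1 b2 l2 s =
   - (l1 - l2) + \sum_t (P1 s t - P0 s t) * (b1 t - b2 t).
  rewrite /act_adv.
  have -> : \sum_t (P1 s t - P0 s t) * (b1 t - b2 t) =
     \sum_t (P1 s t - P0 s t) * b1 t - \sum_t (P1 s t - P0 s t) * b2 t.
    by rewrite -sumrB; apply: eq_bigr => t _; rewrite mulrBr.
  lra.
case: (eqVneq l1 l2) => [El|Nl].
  subst l2.
  have [gW1 [bW1 [HgbW1 Hopt1]]] := Hbo1.
  have [gW2 [bW2 [HgbW2 Hopt2]]] := Hbo2.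
  have [E1 E1'] := gb_unique (Ppol_stoch H0 H1 pi1) (Hu pi1) HgbW1 Hgb1.
  have [E2 E2'] := gb_unique (Ppol_stoch H0 H1 pi2) (Hu pi2) HgbW2 Hgb2.
  subst gW1 bW1 gW2 bW2.
  have [Hg21 Ht1] := Hopt1 pi2 g2 b2 Hgb2.
  have [Hg12 Ht2] := Hopt2 pi1 g1 b1 Hgb1.
  have Eg : g2 = g1 by apply/eqP; rewrite eq_le Hg21 Hg12.
  have Eb : b1 = b2.
    apply: funext => x; apply/eqP; rewrite eq_le Ht2 ?Ht1 //.
  by subst b2; rewrite subrr normr0 subrr normr0 mule0.
have Hd : 0 < `|l1 - l2| by rewrite normr_gt0 subr_eq0.
set dl := l1 - l2 in Hdiff Hd *.
case ED : (Dmax P0 P1) => [D| |]; last first.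
  - by have := bigmax_ge0 (fun pi : {set S} => diameter (Ppol P0 P1 pi));
      rewrite -/(Dmax P0 P1) ED.
  - rewrite gt0_muley ?lte_fin // addye // gt0_mulye ?lte_fin //.
    exact: leey.
have [y /andP [Hy1 Hy2]] := common_rec Hu pi1 pi2.
have opt2 := fun x => @opt_ineq R S P0 P1 r0 r1 H0 H1 Hu l2 pi2 g2 b2 pi1 x Hbo2 Hgb2.
have opt1 := fun x => @opt_ineq R S P0 P1 r0 r1 H0 H1 Hu l1 pi1 g1 b1 pi2 x Hbo1 Hgb1.
pose d := fun t => b1 t - b2 t.
pose G := g2 - g1.
have sumd : forall (Q : S -> S -> R) x,
    \sum_t Q x t * d t = \sum_t Q x t * b1 t - \sum_t Q x t * b2 t.
  by move=> Q x; rewrite -sumrB; apply: eq_bigr => t _; rewrite mulrBr.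
have HI : forall x, d x - \sum_t Ppol P0 P1 pi1 x t * d t <= G - dl * (x \in pi1)%:R.
  move=> x; have e1 := Hgb1.1 x; have o2 := opt2 x.
  have rd := rpol_diff r0 r1 l1 l2 pi1 x; rewrite -/dl in rd.
  rewrite sumd /d /G; lra.
have HII : forall x, (- d x) - \sum_t Ppol P0 P1 pi2 x t * (- d t)
     <= - G + dl * (x \in pi2)%:R.
  move=> x; have e2 := Hgb2.1 x; have o1 := opt1 x.
  have rd := rpol_diff r0 r1 l1 l2 pi2 x; rewrite -/dl in rd.
  have -> : \sum_t Ppol P0 P1 pi2 x t * (- d t) = - \sum_t Ppol P0 P1 pi2 x t * d t.
    by rewrite -sumrN; apply: eq_bigr => t _; rewrite mulrN.
  rewrite sumd /d /G; lra.
have [_ [mu1 [Hmu1 _]]] := Hgb1.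
have [_ [mu2 [Hmu2 _]]] := Hgb2.
have avgG : forall (mu : S -> R) (pi : {set S}) c0 c, stationary (Ppol P0 P1 pi) mu ->
    \sum_x mu x * (c0 + c * (x \in pi)%:R) = c0 + c * \sum_x mu x * (x \in pi)%:R.
  move=> mu pi c0 c [_ [Hm1 _]].
  under eq_bigr do rewrite mulrDr.
  rewrite big_split /= -big_distrl /= Hm1 mul1r big_distrr /=; congr (_ + _).
  by apply: eq_bigr => x _; rewrite mulrCA.
have m01 : forall (mu : S -> R) (pi : {set S}), stationary (Ppol P0 P1 pi) mu ->
    0 <= \sum_x mu x * (x \in pi)%:R <= 1.
  move=> mu pi [Hm0 [Hm1 _]]; apply/andP; split.
    by apply: sumr_ge0 => x _; apply: mulr_ge0.
  apply: le_trans (_ : _ <= \sum_x mu x) _; last by rewrite Hm1.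
  apply: ler_sum => x _; rewrite -[X in _ <= X]mulr1.
  by apply: ler_wpM2l => //; case: (x \in pi); rewrite ?lexx ?ler01.
set m1 := \sum_x mu1 x * (x \in pi1)%:R.
set m2 := \sum_x mu2 x * (x \in pi2)%:R.
have Hm1 : dl * m1 <= G.
  have Hfh : forall x, d x - \sum_t Ppol P0 P1 pi1 x t * d t
      <= G + (- dl) * (x \in pi1)%:R by move=> x; have := HI x; lra.
  have := avg_le (Hmu1.1) Hfh.
  rewrite (stat_avg _ Hmu1) (avgG _ _ _ _ Hmu1) -/m1; lra.
have Hm2 : G <= dl * m2.
  have := avg_le (Hmu2.1) HII.
  rewrite (stat_avg _ Hmu2).
  rewrite (avgG _ _ _ _ Hmu2) -/m2.
  lra.
have B1 : forall x, d x - d y <= `|dl| * D.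
  move=> x.
  have h := hit_bound (Ppol_stoch H0 H1 pi1) (y := y) (v := d) (C := `|dl|) Hd
    (fun x _ => le_trans (HI x) (arith Hm1 Hm2 (m01 _ _ Hmu1) (m01 _ _ Hmu2) (ind01 R _)).1) x.
  have h2 := exp_hit_le_Dmax x Hy1; rewrite ED in h2.
  have := le_trans h (lee_wpmul2l (ltW (_ : (0 < `|dl|%:E)%E)) h2).
  by rewrite -EFinM lee_fin; apply; rewrite lte_fin.
have B2 : forall x, d y - d x <= `|dl| * D.
  move=> x.
  have h := hit_bound (Ppol_stoch H0 H1 pi2) (y := y) (v := fun t => - d t) (C := `|dl|) Hd
    (fun x _ => le_trans (HII x) (arith Hm1 Hm2 (m01 _ _ Hmu1) (m01 _ _ Hmu2) (ind01 R _)).2) x.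
  have h2 := exp_hit_le_Dmax x Hy2; rewrite ED in h2.
  have Hp : (0 < `|dl|%:E)%E by rewrite lte_fin.
  have := le_trans h (lee_wpmul2l (ltW Hp) h2).
  rewrite -EFinM lee_fin; lra.
have SP : forall (Q : S -> S -> R), row_stochastic Q ->
    \sum_t Q s t * (b1 t - b2 t) = \sum_t Q s t * (d t - d y) + d y.
  move=> Q [_ HQ1]; under [in RHS]eq_bigr do rewrite mulrBr.
  by rewrite sumrB -big_distrl /= HQ1 mul1r subrK.
have E : \sum_t (P1 s t - P0 s t) * (b1 t - b2 t) =
    \sum_t P1 s t * (d t - d y) - \sum_t P0 s t * (d t - d y).
  under eq_bigr do rewrite mulrBl.
  by rewrite sumrB (SP _ H1) (SP _ H0); lra.
have B2' : forall t, - (`|dl| * D) <= d t - d y by move=> t; have := B2 t; lra.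
have U1 := @sumP_le R S P1 s (fun t => d t - d y) (`|dl| * D) H1 B1.
have U0 := @sumP_le R S P0 s (fun t => d t - d y) (`|dl| * D) H0 B1.
have L1 := @sumP_ge R S P1 s (fun t => d t - d y) (- (`|dl| * D)) H1 B2'.
have L0 := @sumP_ge R S P0 s (fun t => d t - d y) (- (`|dl| * D)) H0 B2'.
rewrite Hdiff E -?EFinM -?EFinD -?EFinM lee_fin ler_norml.
have Hd0 : 0 <= `|dl| := ltW Hd.
have : - dl <= `|dl| /\ dl <= `|dl| by split; [rewrite -normrN ler_norm | rewrite ler_norm].
move=> [n1 n2].
apply/andP; split; nra.
Qed.
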